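(* Let $d\ge 3$, let $\mathcal{H}_A=\mathcal{H}_B=\mathbb{C}^d$ with fixed orthonormal bases $|1\rangle,\dots,|d\rangle$, and $\mathcal{H}=\mathcal{H}_A\otimes\mathcal{H}_B$. The following are equivalent: (i) none of the Werner states $\rho_W(t)=1-tF$ with $t\in(1/d,1/2]$ is $2$-distillable; (ii) the function $$\Phi(x_1,\dots,x_d,y_1,\dots,y_d,u_1,\dots,u_d,v_1,\dots,v_d)=\langle\psi|\,\sigma_W^{\otimes 2}\,|\psi\rangle,\qquad |\psi\rangle=\sum_{i,j=1}^d|i,j,x_i,u_j\rangle+\sum_{i,j=1}^d|i,j,y_i,v_j\rangle,$$ is nonnegative for all vectors $x_i,y_i\in\mathcal{H}_A$ and $u_i,v_i\in\mathcal{H}_B$ ($i=1,\dots,d$), where $\sigma_W=1-\tfrac{d}{2}P$.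
   Context: The flip operator is $F=\sum_{i,j}|i,j\rangle\langle j,i|$ on $\mathcal{H}$, and $P=\frac1d\sum_{i,j}|i,i\rangle\langle j,j|$ is the projector onto the maximally entangled state; $dP$ is the partial transpose $1\otimes T(F)$, so the partial transpose of $\rho_W(t)$ is $1-tdP$. In $|i,j,x_i,u_j\rangle$ the four tensor factors are, in order, Alice's first copy $\mathcal{H}_A$, Bob's first copy $\mathcal{H}_B$, Alice's second copy $\mathcal{H}_A$, Bob's second copy $\mathcal{H}_B$; thus $\sigma_W^{\otimes 2}$ acts on $\mathcal{H}\otimes\mathcal{H}$ with the first $\sigma_W$ on the first two factors and the second on the last two. A bipartite state $\rho$ on $\mathcal{H}$ is called $k$-distillable if there exists a (non-normalized) vector $|\psi\rangle\in\mathcal{H}^{\otimes k}$, regarded as a bipartite vector in $\mathcal{H}_A^{\otimes k}\otimes\mathcal{H}_B^{\otimes k}$, of Schmidt rank at most two such that $\langle\psi|\sigma^{\otimes k}|\psi\rangle<0$, where $\sigma=1\otimes T(\rho)$ is the partial transpose of $\rho$. *)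

(* Defs.v *)
From HB Require Import structures.
From mathcomp Require Import all_boot all_order all_algebra.
From mathcomp Require Import complex.
From mathcomp Require Import reals.

Set Implicit Arguments.
Unset Strict Implicit.
Unset Printing Implicit Defensive.

Import Order.TTheory GRing.Theory Num.Theory.
Local Open Scope ring_scope.

Section Defs.
Variable C : numClosedFieldType.
Variable d : nat.

(* Basis index of H = H_A (x) H_B : the pair (i, j) stands for |i,j> = |i>_A |j>_B. *)
Definition idx := ('I_d * 'I_d)%type.

(* A (linear) operator on a space with orthonormal basis indexed by a finType T,
   given by its matrix entries  M x y = <x| M |y>. *)
Definition op (T : finType) := T -> T -> C.

Definition id_op (T : finType) : op T := fun x y => (x == y)%:R.

(* flip operator F = sum_{i,j} |i,j><j,i| :  <i,j|F|k,l> = [k = j][l = i] *)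
Definition flip : op idx := fun x y => ((y.1 == x.2) && (y.2 == x.1))%:R.

(* P = 1/d sum_{i,j} |i,i><j,j| : <i,j|P|k,l> = 1/d [i = j][k = l] *)
Definition maxent_proj : op idx :=
  fun x y => (d%:R)^-1 * ((x.1 == x.2) && (y.1 == y.2))%:R.

(* (non-normalized) Werner state rho_W(t) = 1 - t F *)
Definition werner (t : C) : op idx := fun x y => id_op x y - t * flip x y.

(* partial transpose 1 (x) T on Bob's factor: <i,j|sigma|k,l> = <i,l|rho|k,j> *)
Definition ptrans (rho : op idx) : op idx :=
  fun x y => rho (x.1, y.2) (y.1, x.2).

Definition sigmaW : op idx :=
  fun x y => id_op x y - (d%:R / 2%:R) * maxent_proj x y.

(* H^{(x)k}: a basis vector is a family (i_m, j_m)_{m<k}, i.e.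
   |i_1,j_1,i_2,j_2,...,i_k,j_k>, factors ordered A1,B1,A2,B2,... *)
Definition kidx (k : nat) := {ffun 'I_k -> idx}.

Definition tpow (k : nat) (s : op idx) : op (kidx k) :=
  fun x y => \prod_(m < k) s (x m) (y m).

Definition qform (T : finType) (M : op T) (psi : T -> C) : C :=
  \sum_(x : T) \sum_(y : T) (psi x)^* * M x y * psi y.

Definition kA (k : nat) := {ffun 'I_k -> 'I_d}.

Definition join_idx (k : nat) (a b : kA k) : kidx k := [ffun m => (a m, b m)].

(* coefficient matrix of psi in H_A^{(x)k} (x) H_B^{(x)k} w.r.t. product bases *)
Definition coef_mx (k : nat) (psi : kidx k -> C) : 'M[C]_(#|kA k|, #|kA k|) :=
  \matrix_(i, j) psi (join_idx (enum_val i) (enum_val j)).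

Definition schmidt_rank (k : nat) (psi : kidx k -> C) : nat := \rank (coef_mx psi).

Definition distillable (k : nat) (rho : op idx) : Prop :=
  exists psi : kidx k -> C,
    (schmidt_rank psi <= 2)%N /\ qform (@tpow k (ptrans rho)) psi < 0.

(* the vector psi = sum_{i,j} |i,j,x_i,u_j> + sum_{i,j} |i,j,y_i,v_j>  in H^{(x)2};
   x_i, y_i in H_A = C^d and u_j, v_j in H_B = C^d are given by coordinates. *)
Definition psi2 (x y u v : 'I_d -> 'I_d -> C) : kidx 2 -> C :=
  fun z => let: (i, j) := z ord0 in let: (a, b) := z (@Ordinal 2 1 isT) in
           x i a * u j b + y i a * v j b.

Definition Phi (x y u v : 'I_d -> 'I_d -> C) : C :=
  qform (@tpow 2 sigmaW) (psi2 x y u v).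

End Defs.

Arguments tpow {C d} k s _ _.
Arguments distillable {C d} k rho.
Arguments werner {C} d t _ _.
Arguments Phi {C d} x y u v.

(* Main.v *)
Require Import Defs.
From HB Require Import structures.
From mathcomp Require Import all_boot all_order all_algebra.
From mathcomp Require Import complex.
From mathcomp Require Import reals.
From mathcomp Require Import ring.
Import Order.TTheory GRing.Theory Num.Theory.
Local Open Scope ring_scope.

Section Core.
Variable C : numClosedFieldType.
Variable d : nat.

Definition o1 : 'I_2 := @Ordinal 2 1 isT.
Definition mk (p q : idx d) : kidx d 2 := [ffun m : 'I_2 => if m == ord0 then p else q].
Lemma mk0 p q : mk p q ord0 = p. Proof. by rewrite ffunE. Qed.
Lemma mk1 p q : mk p q o1 = q. Proof. by rewrite ffunE. Qed.
Lemma mk_eta (z : kidx d 2) : mk (z ord0) (z o1) = z.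
Proof.
apply/ffunP => m; rewrite ffunE; case: ifP => [/eqP -> //|].
case: m => [[|[|m]] Hm] //= _; congr (z _); exact: val_inj.
Qed.

Lemma sum_kidx (F : kidx d 2 -> C) : \sum_z F z = \sum_p \sum_q F (mk p q).
Proof.
rewrite pair_big /=.
rewrite (reindex (fun pq : idx d * idx d => mk pq.1 pq.2)) //=.
exists (fun z => (z ord0, z o1)).
  by move=> [p q] _; rewrite /= mk0 mk1.
by move=> z _; rewrite /= mk_eta.
Qed.

Definition op2 (A B : op C (idx d)) : op C (kidx d 2) :=
  fun x y => A (x ord0) (y ord0) * B (x o1) (y o1).

Lemma tpow2E s : tpow 2 s =2 op2 s s.
Proof. move=> x y; rewrite /tpow big_ord_recl big_ord1.
by have -> : lift ord0 ord0 = o1 :> 'I_2 by apply: val_inj.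
Qed.

Lemma qform_ext (T : finType) (M M' : op C T) (f g : T -> C) :
  M =2 M' -> f =1 g -> qform M f = qform M' g.
Proof.
move=> HM Hf; apply: eq_bigr => x _; apply: eq_bigr => y _.
by rewrite HM !Hf.
Qed.

Lemma qformE (M : op C (kidx d 2)) (psi : kidx d 2 -> C) : qform M psi = \sum_p0 \sum_p1 \sum_q0 \sum_q1
  (psi (mk p0 p1))^* * M (mk p0 p1) (mk q0 q1) * psi (mk q0 q1).
Proof.
rewrite /qform sum_kidx; apply: eq_bigr => p0 _; apply: eq_bigr => p1 _.
by rewrite sum_kidx.
Qed.

Lemma op2E A B p0 p1 q0 q1 : op2 A B (mk p0 p1) (mk q0 q1) = A p0 q0 * B p1 q1.
Proof. by rewrite /op2 !mk0 !mk1. Qed.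

Lemma collapse (F : idx d -> C) e : \sum_p (e == p)%:R * F p = F e.
Proof.
rewrite (bigD1 e) //= eqxx mul1r big1 ?addr0 // => p hp.
by rewrite eq_sym (negbTE hp) mul0r.
Qed.

Lemma L1 A psi : qform (op2 A (@id_op C _)) psi =
  \sum_w qform A (fun p => psi (mk p w)).
Proof.
rewrite qformE exchange_big; apply: eq_bigr => w _; apply: eq_bigr => p0 _.
apply: eq_bigr => q0 _.
rewrite -(collapse (fun q1 => (psi (mk p0 w))^* * A p0 q0 * psi (mk q0 q1))) /=.
apply: eq_bigr => q1 _; rewrite op2E /id_op; ring.
Qed.

Lemma L2 B psi : qform (op2 (@id_op C _) B) psi =
  \sum_w qform B (fun q => psi (mk w q)).
Proof.
rewrite qformE; apply: eq_bigr => w _; rewrite /qform; apply: eq_bigr => p1 _.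
rewrite -(collapse (fun q0 => \sum_q1 (psi (mk w p1))^* * B p1 q1 * psi (mk q0 q1))) /=.
apply: eq_bigr => q0 _; rewrite mulr_sumr; apply: eq_bigr => q1 _.
rewrite op2E /id_op; ring.
Qed.

Lemma L3 A B (f g : idx d -> C) :
  qform (op2 A B) (fun z => f (z ord0) * g (z o1)) = qform A f * qform B g.
Proof.
rewrite qformE /qform mulr_suml; apply: eq_bigr => p0 _.
rewrite mulr_suml exchange_big; apply: eq_bigr => q0 _.
rewrite mulr_sumr; apply: eq_bigr => p1 _.
rewrite mulr_sumr; apply: eq_bigr => q1 _.
rewrite op2E !mk0 !mk1 rmorphM /=; ring.
Qed.

Lemma L4 (B : op C (idx d)) (e : idx d) : qform B (fun p => (e == p)%:R) = B e e.
Proof.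
rewrite /qform.
transitivity (\sum_p (e == p)%:R * (\sum_q (e == q)%:R * B p q)).
  apply: eq_bigr => p _; rewrite mulr_sumr; apply: eq_bigr => q _.
  rewrite conjC_nat; ring.
rewrite collapse; rewrite (collapse (fun q => B e q)) //.
Qed.

Lemma L5 (f : idx d -> C) : 0 <= qform (@id_op C _) f.
Proof.
rewrite /qform; apply: sumr_ge0 => p _.
rewrite (eq_bigr (fun q => (p == q)%:R * ((f p)^* * f q))).
  by rewrite collapse mulrC mul_conjC_ge0.
by move=> q _; rewrite /id_op; ring.
Qed.

Lemma psi2E (X Y U V : 'I_d -> 'I_d -> C) z : psi2 X Y U V z =
  X (z ord0).1 (z o1).1 * U (z ord0).2 (z o1).2 +
  Y (z ord0).1 (z o1).1 * V (z ord0).2 (z o1).2.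
Proof. by rewrite /psi2; case: (z ord0) => i j; case: (z o1). Qed.

Lemma sigmaW_ee (k l : 'I_d) : k != l -> (@sigmaW C d) (k, l) (k, l) = 1.
Proof.
by move=> hkl; rewrite /sigmaW /maxent_proj /id_op eqxx /= (negbTE hkl) mulr0 mulr0 subr0.
Qed.

Lemma slice_pos (k l : 'I_d) (hkl : k != l)
  (H : forall X Y U V : 'I_d -> 'I_d -> C, 0 <= Phi X Y U V)
  (x y x' y' : 'I_d -> C) :
  0 <= qform ((@sigmaW C d)) (fun p : idx d => x p.1 * y p.2 + x' p.1 * y' p.2).
Proof.
have := H (fun i a => x i * (k == a)%:R) (fun i a => x' i * (k == a)%:R)
          (fun j b => y j * (l == b)%:R) (fun j b => y' j * (l == b)%:R).
pose phi := fun p : idx d => x p.1 * y p.2 + x' p.1 * y' p.2.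
pose del := fun p : idx d => ((k, l) == p)%:R : C.
rewrite /Phi (@qform_ext _ _ (op2 ((@sigmaW C d)) ((@sigmaW C d))) _
   (fun z => phi (z ord0) * del (z o1))).
- by rewrite L3 L4 sigmaW_ee // mulr1 => h; exact: h.
- exact: tpow2E.
move=> z; rewrite psi2E /phi /del /=; case: (z o1) => a b /=; rewrite xpair_eqE.
by case: (k == a); case: (l == b); rewrite /= ?mulr0 ?mulr1 ?mul0r ?addr0; ring.
Qed.

Lemma qform_lin (T : finType) (a : C) (M N : op C T) f :
  qform (fun x y => a * M x y + N x y) f = a * qform M f + qform N f.
Proof.
rewrite /qform mulr_sumr -big_split; apply: eq_bigr => x _.
rewrite mulr_sumr -big_split; apply: eq_bigr => y _ /=; ring.
Qed.

Lemma qform_scale (T : finType) (a : C) (M : op C T) f :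
  qform (fun x y => a * M x y) f = a * qform M f.
Proof.
rewrite /qform mulr_sumr; apply: eq_bigr => x _.
rewrite mulr_sumr; apply: eq_bigr => y _ /=; ring.
Qed.

Lemma dir2 (k l : 'I_d) (hkl : k != l)
  (H : forall X Y U V : 'I_d -> 'I_d -> C, 0 <= Phi X Y U V)
  (a : C) (ha0 : 0 <= a) (ha1 : a <= 1) (X Y U V : 'I_d -> 'I_d -> C) :
  0 <= qform (op2 (fun x y => a * (@sigmaW C d) x y + (1 - a) * @id_op C _ x y)
                  (fun x y => a * (@sigmaW C d) x y + (1 - a) * @id_op C _ x y))
     (psi2 X Y U V).
Proof.
set S := (@sigmaW C d); set I := @id_op C (idx d).
rewrite (@qform_ext _ _ (fun x y => a ^+ 2 * op2 S S x y +
   ((a * (1 - a)) * op2 S I x y + ((a * (1 - a)) * op2 I S x y +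
   (1 - a) ^+ 2 * op2 I I x y))) _ (psi2 X Y U V)) //; last first.
  by move=> x y; rewrite /op2; ring.
rewrite !qform_lin qform_scale.
have h1a : 0 <= 1 - a by rewrite subr_ge0.
have hslice : forall f, (exists x y x' y' : 'I_d -> C, f =1 (fun p : idx d => x p.1 * y p.2 + x' p.1 * y' p.2)) -> 0 <= qform S f.
  move=> f [x [y [x' [y' hf]]]].
  rewrite (@qform_ext _ _ (S) _ (fun p : idx d => x p.1 * y p.2 + x' p.1 * y' p.2)) //.
  exact: (@slice_pos k l hkl H x y x' y').
apply: addr_ge0; first apply: mulr_ge0; first exact: exprn_ge0.
  rewrite (@qform_ext _ _ (tpow 2 S) _ (psi2 X Y U V)) //; first exact: H.
  by move=> x y; rewrite tpow2E.
apply: addr_ge0; first apply: mulr_ge0; first exact: mulr_ge0.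
  rewrite L1; apply: sumr_ge0 => w _; apply: hslice.
  exists (fun i => X i w.1), (fun j => U j w.2), (fun i => Y i w.1), (fun j => V j w.2).
  by move=> p; rewrite psi2E mk0 mk1.
apply: addr_ge0; first apply: mulr_ge0; first exact: mulr_ge0.
  rewrite L2; apply: sumr_ge0 => w _; apply: hslice.
  exists (X w.1), (U w.2), (Y w.1), (V w.2).
  by move=> p; rewrite psi2E mk0 mk1.
apply: mulr_ge0; first exact: exprn_ge0.
rewrite L1; apply: sumr_ge0 => w _; exact: L5.
Qed.


Lemma wernerE (tc : C) : (d%:R : C) != 0 ->
  ptrans (werner d tc) =2
  (fun x y => (2 * tc) * (@sigmaW C d) x y + (1 - 2 * tc) * @id_op C _ x y).
Proof.
move=> hD [x1 x2] [y1 y2].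
rewrite /ptrans /werner /sigmaW /maxent_proj /flip /id_op /= !xpair_eqE.
have e1 : (x1 == y1) && (y2 == x2) = (x1 == y1) && (x2 == y2) by rewrite (eq_sym y2).
have e2 : (y1 == y2) && (x2 == x1) = (x1 == x2) && (y1 == y2) by rewrite andbC (eq_sym x2).
rewrite e1 e2.
set B := ((x1 == y1) && (x2 == y2))%:R.
set E := ((x1 == x2) && (y1 == y2))%:R.
set D := d%:R.
have h2 : (2 : C) != 0 by rewrite pnatr_eq0.
move: hD; rewrite -/D => hD; clearbody B E D.
by field.
Qed.

Lemma sigmaW_real x y : (@sigmaW C d) x y \is Num.real.
Proof.
rewrite /sigmaW /maxent_proj /id_op.
by rewrite rpredB ?rpredM ?rpredV ?rpred_nat.
Qed.

Lemma sigmaW_sym x y : (@sigmaW C d) x y = (@sigmaW C d) y x.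
Proof. by rewrite /sigmaW /maxent_proj /id_op eq_sym andbC. Qed.

Lemma Phi_real (X Y U V : 'I_d -> 'I_d -> C) : (Phi X Y U V : C)^* = Phi X Y U V.
Proof.
rewrite /Phi /qform rmorph_sum exchange_big /=; apply: eq_bigr => y _.
rewrite rmorph_sum; apply: eq_bigr => x _ /=.
rewrite !rmorphM /= conjCK (tpow2E _ x y) (tpow2E _ y x) /op2 rmorphM /=.
rewrite !(conj_Creal (sigmaW_real _ _)) (sigmaW_sym (y ord0)) (sigmaW_sym (y o1)).
ring.
Qed.


Lemma rank_psi2 (X Y U V : 'I_d -> 'I_d -> C) : (schmidt_rank (psi2 X Y U V) <= 2)%N.
Proof.
rewrite /schmidt_rank.
set N := #|kA d 2|.
have -> : coef_mx (psi2 X Y U V) =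
  (\matrix_(i < N, j < 1) X (enum_val i ord0) (enum_val i o1)) *m
  (\matrix_(i < 1, j < N) U (enum_val j ord0) (enum_val j o1)) +
  (\matrix_(i < N, j < 1) Y (enum_val i ord0) (enum_val i o1)) *m
  (\matrix_(i < 1, j < N) V (enum_val j ord0) (enum_val j o1)).
  apply/matrixP => i j; rewrite !mxE !big_ord1 !mxE psi2E /join_idx !ffunE /=.
  by [].
apply: leq_trans (mxrank_add _ _) _.
by rewrite -[2%N]/(1 + 1)%N; apply: leq_add; apply: mulmx_max_rank.
Qed.

Lemma factor2 (N r : nat) (hr : (r <= 2)%N) (A : 'M[C]_(N, r)) (B : 'M[C]_(r, N)) :
  exists f0 g0 f1 g1 : 'I_N -> C, forall i j, (A *m B) i j = f0 i * g0 j + f1 i * g1 j.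
Proof.
case: r hr A B => [|[|[|r]]] // _ A B.
- exists (fun=> 0), (fun=> 0), (fun=> 0), (fun=> 0) => i j.
  by rewrite mxE big_ord0 !mul0r addr0.
- exists (fun i => A i ord0), (fun j => B ord0 j), (fun=> 0), (fun=> 0) => i j.
  by rewrite mxE big_ord1 mul0r addr0.
- exists (fun i => A i ord0), (fun j => B ord0 j),
    (fun i => A i (lift ord0 ord0)), (fun j => B (lift ord0 ord0) j) => i j.
  by rewrite mxE big_ord_recl big_ord1.
Qed.

Lemma rank2_form (psi : kidx d 2 -> C) : (schmidt_rank psi <= 2)%N ->
  exists X Y U V : 'I_d -> 'I_d -> C, psi =1 psi2 X Y U V.
Proof.
move=> hr.
have [f0 [g0 [f1 [g1 hf]]]] := @factor2 _ _ hr (col_base (coef_mx psi)) (row_base (coef_mx psi)).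
rewrite mulmx_base in hf.
pose mkA (i a : 'I_d) : kA d 2 := [ffun m : 'I_2 => if m == ord0 then i else a].
exists (fun i a => f0 (enum_rank (mkA i a))), (fun i a => f1 (enum_rank (mkA i a))),
  (fun j b => g0 (enum_rank (mkA j b))), (fun j b => g1 (enum_rank (mkA j b))).
move=> z; rewrite psi2E.
have hA : mkA (z ord0).1 (z o1).1 = [ffun m => (z m).1].
  apply/ffunP => m; rewrite !ffunE; case: ifP => [/eqP -> //|].
  case: m => [[|[|m]] Hm] //= _; congr (z _).1; exact: val_inj.
have hB : mkA (z ord0).2 (z o1).2 = [ffun m => (z m).2].
  apply/ffunP => m; rewrite !ffunE; case: ifP => [/eqP -> //|].
  case: m => [[|[|m]] Hm] //= _; congr (z _).2; exact: val_inj.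
rewrite hA hB -hf mxE !enum_rankK.
congr psi; apply/ffunP => m; rewrite !ffunE; by case: (z m).
Qed.

End Core.

Theorem proposition2p1 (R : realType) (d : nat) (hd : (3 <= d)%N) :
  (forall t : R, (d%:R)^-1 < t -> t <= 2%:R^-1 ->
      ~ distillable 2 (werner (C := R[i]) d (t%:C)%C))
  <->
  (forall x y u v : 'I_d -> 'I_d -> R[i], 0 <= Phi x y u v).
Proof.
have hD : (d%:R : R[i]) != 0 by rewrite pnatr_eq0 -lt0n (leq_trans _ hd).
have hdR : (0 : R) < d%:R by rewrite ltr0n (leq_trans _ hd).
have h2c : forall t : R, (2 * t%:C = (2 * t)%:C :> R[i])%C.
  by move=> t; rewrite rmorphM /= rmorph_nat.
split.
- move=> Hi X Y U V.
  have ht : (d%:R : R)^-1 < 2%:R^-1.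
    by rewrite ltf_pV2 ?posrE ?ltr0n ?ltr_nat // (leq_trans _ hd).
  have nd := Hi _ ht (lexx _).
  have hreal : Phi X Y U V \is Num.real by apply/CrealP; exact: Phi_real.
  case: (real_ge0P hreal) => // hneg; exfalso; apply: nd.
  exists (psi2 X Y U V); split; first exact: rank_psi2.
  rewrite (@qform_ext _ _ _ (tpow 2 (@sigmaW _ d)) _ (psi2 X Y U V)) //.
  move=> x y; rewrite !tpow2E /op2 !wernerE // h2c mulfV ?pnatr_eq0 //.
  by rewrite rmorph1 subrr !mul0r !addr0 !mul1r.
- move=> Hii t ht1 ht2 [psi [hr hneg]].
  have [X [Y [U [V hpsi]]]] := @rank2_form _ _ psi hr.
  have hk : (0 < d)%N by rewrite (leq_trans _ hd).
  have hl : (1 < d)%N by rewrite (leq_trans _ hd).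
  have hkl : Ordinal hk != Ordinal hl by [].
  have ht0 : 0 < t by apply: lt_trans ht1; rewrite invr_gt0.
  have ha0 : (0 : R[i]) <= ((2 * t)%:C)%C by rewrite ler0c mulr_ge0 // ltW.
  have ha1 : (((2 * t)%:C)%C : R[i]) <= 1.
    rewrite -(rmorph1 (real_complex R)) lecR.
    have h22 : (2:R) * 2^-1 = 1 by rewrite mulfV // pnatr_eq0.
    by rewrite -[X in _ <= X]h22; apply: ler_wpM2l.
  have := @dir2 _ _ _ _ hkl Hii _ ha0 ha1 X Y U V.
  rewrite -(@qform_ext _ _ (tpow 2 (ptrans (werner d (t%:C)%C))) _ psi); last first.
  + by move=> z; rewrite hpsi.
  + by move=> x y; rewrite !tpow2E /op2 !wernerE // h2c.
  by move=> h; rewrite le_gtF in hneg.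
Qed.
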